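(* For odd $N\ge5$ let $G_{N,1}$ be the graph with vertex set $\mathbb Z_N$ in which two distinct vertices $i,j$ are adjacent iff $j-i\not\equiv\pm1\pmod N$. Fix an integer $q\ge 1$ independent of $N$, and for each $N$ let $u,v\in\mathbb Z_N$ with $v-u\equiv q\pmod N$. Then the effective resistance $R^{(1)}(u,v)$ in $G_{N,1}$ satisfies \[ R^{(1)}(u,v)\sim\frac{2}{N}\qquad (N\to\infty \text{ through odd integers}). \]
   Context: Effective resistance is computed with unit conductance on every edge; $a_N\sim b_N$ means $a_N/b_N\to1$. *)

(* Defs.v *)
From HB Require Import structures.
From mathcomp Require Import all_boot all_order all_algebra.
From mathcomp Require Import reals.
Set Implicit Arguments. Unset Strict Implicit. Unset Printing Implicit Defensive.
Import Order.TTheory GRing.Theory Num.Theory.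
Local Open Scope ring_scope.

Definition adjG1 (N : nat) (i j : 'I_N) : bool :=
  [&& i != j, ((j + N - i) %% N)%N != 1%N & ((i + N - j) %% N)%N != 1%N].

Definition laplacian (R : fieldType) (N : nat) (adj : 'I_N -> 'I_N -> bool)
  : 'M[R]_N :=
  \matrix_(i, j) (if i == j then (#|[set k | adj i k]|)%:R
                  else - ((adj i j)%:R)).

(* Here pinvmx is a
   generalized inverse of L; for b in the range of L (connected graph) the
   quadratic form b X b^T does not depend on the choice of generalized
   inverse X, so this is the usual effective resistance (= potential
   difference phi u - phi v of any solution of L phi = e_u - e_v). *)
Definition eff_res (R : fieldType) (N : nat) (adj : 'I_N -> 'I_N -> bool)
  (u v : 'I_N) : R :=
  let b : 'rV[R]_N := delta_mx 0 u - delta_mx 0 v in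
  (b *m pinvmx (laplacian R adj) *m b^T) 0 0.

(* Main.v *)
Require Import Defs.
From HB Require Import structures.
From mathcomp Require Import all_boot all_order all_algebra.
From mathcomp Require Import reals.
From mathcomp Require Import zify ring lra.
Import Order.TTheory GRing.Theory Num.Theory.
Set Implicit Arguments. Unset Strict Implicit. Unset Printing Implicit Defensive.
Local Open Scope ring_scope.

Lemma adjG1_sym N (i j : 'I_N) : adjG1 i j = adjG1 j i.
Proof. by rewrite /adjG1 eq_sym [X in _ && X]andbC. Qed.

Definition nb N (i j : 'I_N) : bool := (i != j) && ~~ adjG1 i j.

Lemma nb_sym N (i j : 'I_N) : nb i j = nb j i.
Proof. by rewrite /nb eq_sym adjG1_sym. Qed.

Lemma mod2 m N : (0 < N)%N -> (m < N + N)%N -> (m %% N = if (m < N)%N then m else m - N)%N.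
Proof.
move=> HN h; case: ltnP => h2; first by rewrite modn_small.
have -> : m = ((m - N) + N)%N by rewrite subnK.
by rewrite modnDr modn_small ?addnK //; lia.
Qed.

Lemma nb_cases N (i j : 'I_N) (HN : (0 < N)%N) :
  nb i j -> (val i = (j.+1) %% N)%N \/ (val i = (j + N.-1) %% N)%N.
Proof.
rewrite /nb /adjG1 => /andP[ne]; rewrite ne /= negb_and !negbK => /orP[/eqP h|/eqP h].
- right. have := ltn_ord i; have := ltn_ord j; move: h; clear ne.
  move: (nat_of_ord i) (nat_of_ord j) => a b h Hj Hi. move: h; rewrite !mod2; try lia. by case: ifP; case: ifP; lia.
- left. have := ltn_ord i; have := ltn_ord j; move: h; clear ne.
  move: (nat_of_ord i) (nat_of_ord j) => a b h Hj Hi. move: h; rewrite !mod2; try lia. by case: ifP; case: ifP; lia.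
Qed.



Definition Kf (R : numFieldType) N (y : 'rV[R]_N) (j : 'I_N) : R :=
  \sum_i (nb i j)%:R * (y 0 j - y 0 i).

Definition Mx (R : numFieldType) N := laplacian R (@adjG1 N) + const_mx 1.

Lemma deg_sum (R : numFieldType) N (j : 'I_N) :
  (#|[set k | adjG1 j k]|)%:R = \sum_(i | i != j) (adjG1 i j)%:R :> R.
Proof.
have ajj : adjG1 j j = false by rewrite /adjG1 eqxx.
rewrite -sum1_card natr_sum.
rewrite [in RHS]big_mkcond /= [in LHS]big_mkcond /=; apply: eq_bigr => i _.
rewrite inE adjG1_sym; case: (eqVneq i j) => [->|ij]; first by rewrite ajj.
by case: (adjG1 i j).
Qed.

Lemma mulM (R : numFieldType) N (y : 'rV[R]_N) j :
  (y *m Mx R N) 0 j = N%:R * y 0 j - Kf y j.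
Proof.
rewrite !mxE.
have -> : N%:R * y 0 j = \sum_(i < N) y 0 j by rewrite sumr_const card_ord mulr_natl.
rewrite /Kf -sumrB (bigD1 j) //= [in RHS](bigD1 j) //=.
under eq_bigr do rewrite !mxE.
rewrite !mxE eqxx /nb eqxx /= mul0r subr0 deg_sum.
rewrite mulrDr mulr1 mulr_sumr -addrA addrC -addrA; congr (_ + _).
rewrite -big_split /=; apply: eq_bigr => i ij; rewrite (negbTE ij) /=.
by case: (adjG1 i j) => /=; rewrite ?mulr0n ?mulr1n; ring.
Qed.

Lemma sum_delta (R : numFieldType) N (a : 'I_N) (x : R) :
  \sum_i (i == a)%:R * x = x.
Proof.
rewrite (bigD1 a) //= eqxx mul1r big1 ?addr0 // => k /negbTE ->; by rewrite mul0r.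
Qed.

Lemma sum_deltaF (R : numFieldType) N (a : 'I_N) (F : 'I_N -> R) :
  \sum_i (i == a)%:R * F i = F a.
Proof.
rewrite (bigD1 a) //= eqxx mul1r big1 ?addr0 // => k /negbTE ->; by rewrite mul0r.
Qed.

Lemma sum_delta1 (R : numFieldType) N (a : 'I_N) :
  \sum_i (i == a)%:R = 1 :> R.
Proof.
rewrite (bigD1 a) //= eqxx big1 ?addr0 // => k /negbTE ->; by [].
Qed.

Lemma K_bound (R : realFieldType) N (y : 'rV[R]_N) (c : R) :
  (forall i, `|y 0 i| <= c) -> forall j, `|Kf y j| <= 4 * c.
Proof.
move=> Hc j.
have HN : (0 < N)%N by apply: leq_ltn_trans (ltn_ord j).
have c0 : 0 <= c by apply: le_trans (Hc j).
pose a := Ordinal (ltn_pmod j.+1 HN).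
pose b := Ordinal (ltn_pmod (j + N.-1) HN).
apply: le_trans (ler_norm_sum _ _ _) _.
apply: (@le_trans _ _ (\sum_i ((i == a)%:R * (2 * c) + (i == b)%:R * (2 * c)))).
  apply: ler_sum => i _.
  have hd : `|y 0 j - y 0 i| <= 2 * c.
    apply: le_trans (ler_normB _ _) _. by rewrite mulr2n mulrDl mul1r lerD.
  case hnb : (nb i j); last first.
    by rewrite mul0r normr0 addr_ge0 // mulr_ge0 // ?mulr_ge0 // ler0n.
  rewrite mul1r.
  case: (nb_cases HN hnb) => h.
  - have -> : (i == a) = true by apply/eqP/val_inj.
    rewrite mul1r; apply: le_trans hd _; rewrite lerDl mulr_ge0 // ?mulr_ge0 // ler0n.
  - have -> : (i == b) = true by apply/eqP/val_inj.
    rewrite mul1r; apply: le_trans hd _; rewrite lerDr mulr_ge0 // ?mulr_ge0 // ler0n.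
rewrite big_split /= !sum_delta; lra.
Qed.

Lemma sumK (R : numFieldType) N (y : 'rV[R]_N) : \sum_j Kf y j = 0.
Proof.
rewrite /Kf.
set X := \sum_j _.
have : X = - X.
  rewrite {1}/X exchange_big /= /X -sumrN; apply: eq_bigr => j _.
  rewrite -sumrN; apply: eq_bigr => i _; rewrite nb_sym; ring.
move/eqP; rewrite -subr_eq0 opprK -mulr2n -mulr_natr mulf_eq0 pnatr_eq0 orbF.
by move/eqP.
Qed.

Lemma argmax_ex (R : realDomainType) N (y : 'rV[R]_N) (j0 : 'I_N) :
  exists j, forall i, `|y 0 i| <= `|y 0 j|.
Proof.
case: (@arg_maxP _ _ _ j0 xpredT (fun i => `|y 0 i|) isT) => j _ H.
by exists j => i; apply: H.
Qed.

Lemma sup_bound (R : realFieldType) N (y : 'rV[R]_N) (j0 : 'I_N) (d : R) :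
  (4 < N)%N -> (forall i, `|N%:R * y 0 i - Kf y i| <= d) ->
  forall i, `|y 0 i| * (N%:R - 4) <= d.
Proof.
move=> HN Hd i.
case: (argmax_ex y j0) => jm Hm.
have Kb := K_bound Hm jm.
have H1 := Hd jm.
have : `|N%:R * y 0 jm| <= d + 4 * `|y 0 jm|.
  apply: le_trans (_ : `|N%:R * y 0 jm - Kf y jm| + `|Kf y jm| <= _).
    by rewrite -[X in `|X| <= _](subrK (Kf y jm)) ler_normD.
  by rewrite lerD.
rewrite normrM normr_nat => H2.
have HN' : 4%:R < N%:R :> R by rewrite ltr_nat.
have := Hm i; have := normr_ge0 (y 0 i); have := normr_ge0 (y 0 jm).
move: HN' H2; rewrite [4%:R]/=.
set a := `|y 0 i|; set b := `|y 0 jm|; set n := N%:R.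
move=> h1 h2 h3 h4 h5.
nra.
Qed.

Lemma Mx_free (R : realFieldType) N : (4 < N)%N -> row_free (Mx R N).
Proof.
move=> HN; rewrite -kermx_eq0; apply/rowV0P => v /sub_kermxP vM.
apply/rowP => j; rewrite !mxE.
have := @sup_bound R N v j 0 HN.
have h0 : forall i, `|N%:R * v 0 i - Kf v i| <= 0.
  by move=> i; rewrite -mulM vM mxE normr0.
move=> /(_ h0 j) h.
have HN' : 4%:R < N%:R :> R by rewrite ltr_nat.
have hv := normr_ge0 (v 0 j).
apply/eqP; rewrite -normr_eq0 eq_le hv andbT.
move: h HN' hv; rewrite [4%:R]/=; set a := `|v 0 j|; set n := N%:R => h1 h2 h3.
nra.
Qed.

Lemma lap_sym (R : numFieldType) N : (laplacian R (@adjG1 N))^T = laplacian R (@adjG1 N).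
Proof.
apply/matrixP => i j; rewrite !mxE eq_sym adjG1_sym.
by case: eqP => // ->.
Qed.

Lemma bval (R : numFieldType) N (u v i : 'I_N) :
  (delta_mx 0 u - delta_mx 0 v : 'rV[R]_N) 0 i = (i == u)%:R - (i == v)%:R.
Proof. by rewrite !mxE. Qed.

Theorem mainTheorem11 (R : realType) (q : nat) (hq : (1 <= q)%N) :
  forall eps : R, 0 < eps ->
  exists N0 : nat, forall (N : nat), (5 <= N)%N -> odd N -> (N0 <= N)%N ->
    forall u v : 'I_N, (v == u + q %[mod N])%N ->
      `| eff_res R (@adjG1 N) u v / (2 / N%:R) - 1 | < eps.
Proof.
move=> eps e0.
exists (Num.truncn (4 / eps) + 5 + q)%N => N h5 _ hN0 u v huv.
have HN : (4 < N)%N by [].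
have uv : u != v.
  apply/negP => /eqP e; have hv := ltn_ord v; move: huv; rewrite e modn_small // mod2 //; try lia.
  by case: ifP; lia.
pose b : 'rV[R]_N := delta_mx 0 u - delta_mx 0 v.
have full : row_full (Mx R N) by rewrite row_full_unit -row_free_unit Mx_free.
have [y yM] : exists y : 'rV[R]_N, y *m Mx R N = b.
  by exists (b *m pinvmx (Mx R N)); rewrite mulmxKpV // submx_full.
have key i : N%:R * y 0 i - Kf y i = b 0 i by rewrite -mulM yM.
have Sy : \sum_i y 0 i = 0.
  have : \sum_i b 0 i = 0.
    under eq_bigr do rewrite bval.
    by rewrite sumrB !sum_delta1 subrr.
  under eq_bigr do rewrite -key.
  rewrite sumrB sumK subr0 -mulr_sumr => /eqP; rewrite mulf_eq0 pnatr_eq0.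
  have -> : (N == 0)%N = false by lia.
  by move/eqP.
have yL : y *m laplacian R (@adjG1 N) = b.
  rewrite -yM /Mx mulmxDr.
  have -> : y *m const_mx 1 = 0 :> 'rV[R]_N.
    apply/rowP => j; rewrite !mxE -[RHS]Sy; apply: eq_bigr => i _; by rewrite ?mxE ?mulr1.
  by rewrite addr0.
have Reff : eff_res R (@adjG1 N) u v = y 0 u - y 0 v.
  rewrite /eff_res -/b.
  have -> : b^T = laplacian R (@adjG1 N) *m y^T by rewrite -yL trmx_mul lap_sym.
  rewrite mulmxA mulmxKpV; last by rewrite -yL submxMl.
  rewrite mxE (eq_bigr (fun i => ((i == u)%:R - (i == v)%:R) * y 0 i)); last first.
    by move=> i _; rewrite bval mxE.
  under eq_bigr do rewrite mulrBl.
  by rewrite sumrB (sum_deltaF u (fun i => y 0 i)) (sum_deltaF v (fun i => y 0 i)).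
have Hyb : forall i, `|y 0 i| * (N%:R - 4) <= 1.
  apply: (sup_bound u HN) => i; rewrite key bval.
  case: (eqVneq i u) => [->|iu]; first by rewrite ?eqxx (negbTE uv) subr0 normr1.
  rewrite ?(negbTE iu) sub0r normrN; case: (i == v); by rewrite ?normr1 ?normr0.
have HN' : 4%:R < N%:R :> R by rewrite ltr_nat.
have Hc : forall i, `|y 0 i| <= 1 / (N%:R - 4).
  move=> i; rewrite ler_pdivlMr; last by rewrite subr_gt0.
  exact: Hyb i.
have Ku := K_bound Hc u; have Kv := K_bound Hc v.
have yu : y 0 u = (1 + Kf y u) / N%:R.
  have := key u; rewrite bval eqxx (negbTE uv) subr0 => h.
  have h' : N%:R * y 0 u - Kf y u = 1 by rewrite h.
  have e : 1 + Kf y u = N%:R * y 0 u by rewrite -(subrK (Kf y u) (N%:R * y 0 u)) h'.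
  rewrite e; field; by rewrite pnatr_eq0; lia.
have yv : y 0 v = (-1 + Kf y v) / N%:R.
  have := key v; rewrite bval eqxx eq_sym (negbTE uv) sub0r => h.
  have h' : N%:R * y 0 v - Kf y v = -1 by rewrite h.
  have e : -1 + Kf y v = N%:R * y 0 v by rewrite -(subrK (Kf y v) (N%:R * y 0 v)) h'.
  rewrite e; field; by rewrite pnatr_eq0; lia.
rewrite Reff yu yv.
have -> : ((1 + Kf y u) / N%:R - (-1 + Kf y v) / N%:R) / (2 / N%:R) - 1
    = (Kf y u - Kf y v) / 2.
  field; by rewrite pnatr_eq0; lia.
have Ht : 4 / eps < (Num.truncn (4 / eps)).+1%:R := truncnS_gt _.
have HNt : ((Num.truncn (4 / eps)).+1%:R : R) <= N%:R - 4.
  rewrite lerBrDr -natrD ler_nat; lia.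
have Hb : 4 / (N%:R - 4) < eps.
  rewrite ltr_pdivrMr ?subr_gt0 //.
  have := lt_le_trans Ht HNt; rewrite ltr_pdivrMr // mulrC //.
have Hb' : 4 * (1 / (N%:R - 4)) < eps by rewrite mulrA mulr1.
move: Ku Kv Hb'; rewrite !ler_norml ltr_norml.
set c := 4 * (1 / (N%:R - 4)); set a := Kf y u; set b' := Kf y v.
move=> /andP[k1 k2] /andP[k3 k4] k5; apply/andP; split; lra.
Qed.
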